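(* Let $n\in\mathbb N$ and put $n_0:=n$; let $\mathbf m=(m_1,\ldots,m_p)\in\mathbb N^p$, $\boldsymbol\varepsilon=(\varepsilon_1,\ldots,\varepsilon_p)\in\{\pm1\}^p$ and $|x|<1$. Then \[ n\int_0^x t^{n-1}dt\,w_{\varepsilon_1}w_0^{m_1-1}w_{\varepsilon_2}w_0^{m_2-1}\cdots w_{\varepsilon_p}w_0^{m_p-1} =(-1)^p\sum_{n\ge n_1\ge\cdots\ge n_p\ge1}x^{n_p}\prod_{j=1}^p\frac{1+\varepsilon_j(-1)^{n_{j-1}+n_j}}{n_j^{m_j}} \] \[ +\frac12\sum_{j=1}^p(-1)^{j-1}\,\mathrm{Mi}_{m_p,\ldots,m_j}\big(-\mathbf q(\varepsilon_{j+1},\ldots,\varepsilon_p),-1;x\big)\big(1-\varepsilon_1\cdots\varepsilon_j(-1)^n\big)M^\star_n\big(m_1,\ldots,m_{j-1};-\mathbf p(\varepsilon_2,\ldots,\varepsilon_j)\big) \] \[ +\frac12\sum_{j=1}^p(-1)^{j-1}\,\mathrm{Mi}_{m_p,\ldots,m_j}\big(\mathbf q(\varepsilon_{j+1},\ldots,\varepsilon_p),1;x\big)\big(1+\varepsilon_1\cdots\varepsilon_j(-1)^n\big)M^\star_n\big(m_1,\ldots,m_{j-1};\mathbf p(\varepsilon_2,\ldots,\varepsilon_j)\big), \] where for $j=p$ the sign vector of $\mathrm{Mi}$ is just $(\mp1)$ resp. $(1)$, and for $j=1$ the $M^\star_n$ factor is $1$.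
   Context: Iterated integrals: $\int_a^b f_q\cdots f_1:=\int_{a<t_q<\cdots<t_1<b}f_q(t_q)\cdots f_1(t_1)$ (leftmost form carries the smallest variable); $w_0=dt/t$, $w_{-1}=2\,dt/(1-t^2)$, $w_1=2t\,dt/(1-t^2)$, $w_0^{0}$ means absent. For $\boldsymbol\varepsilon=(\varepsilon_1,\ldots,\varepsilon_r)\in\{\pm1\}^r$: $\mathbf p(\boldsymbol\varepsilon)=(\varepsilon_1\varepsilon_2\cdots\varepsilon_r,\varepsilon_2\cdots\varepsilon_r,\ldots,\varepsilon_{r-1}\varepsilon_r,\varepsilon_r)$, $\mathbf q(\boldsymbol\varepsilon)=(\varepsilon_1\cdots\varepsilon_r,\varepsilon_1\cdots\varepsilon_{r-1},\ldots,\varepsilon_1\varepsilon_2,\varepsilon_1)$; these are empty for empty input, and $a\boldsymbol\varepsilon=(a\varepsilon_1,\ldots,a\varepsilon_r)$. Multiple $M$-harmonic star sum: $M^\star_n(\mathbf k;\boldsymbol\varepsilon)=\sum_{n\ge n_1\ge\cdots\ge n_r\ge1}\prod_j(1+\varepsilon_j(-1)^{n_j})/n_j^{k_j}$, $M^\star_n(\emptyset;\emptyset)=1$. Multiple $M$-polylogarithm: $\mathrm{Mi}_{\mathbf k}(\boldsymbol\varepsilon;x)=\sum_{n_1>\cdots>n_r>0}x^{n_1}\prod_j(1+\varepsilon_j(-1)^{n_j})/n_j^{k_j}$. *)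

(* Defs.v *)
From Stdlib Require Import Reals List.
From Coquelicot Require Import Coquelicot.
Import ListNotations.
Open Scope R_scope.

Definition sgn (b : bool) : R := if b then 1 else -1.

Fixpoint sumR (n : nat) (f : nat -> R) : R :=
  match n with O => 0 | S m => sumR m f + f (S m) end.

(* Differential forms (as densities w.r.t. dt) *)
Definition w0 (t : R) : R := / t.
Definition wm1 (t : R) : R := 2 / (1 - t ^ 2).
Definition wp1 (t : R) : R := 2 * t / (1 - t ^ 2).
Definition weps (b : bool) : R -> R := if b then wp1 else wm1.

(* Iterated integral, oriented (Chen) version.
   itint a [f_q; ...; f_1] b = int_{a < t_q < ... < t_1 < b} f_q(t_q)...f_1(t_1),
   the leftmost form carrying the smallest variable. *)
Fixpoint itint_rev (a : R) (l : list (R -> R)) (b : R) : R :=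
  match l with
  | [] => 1
  | f :: fs => RInt (fun t => f t * itint_rev a fs t) a b
  end.
Definition itint (a : R) (l : list (R -> R)) (b : R) : R := itint_rev a (rev l) b.

Definition coef (m : nat) (e : R) (k : nat) : R := (1 + e * (-1) ^ k) / (INR k) ^ m.

(* Multiple M-harmonic star sum on a list of pairs (k_j, eps_j):
   sum_{n >= n_1 >= ... >= n_r >= 1} prod_j (1 + eps_j (-1)^{n_j}) / n_j^{k_j} *)
Fixpoint Mstar_l (n : nat) (l : list (nat * R)) : R :=
  match l with
  | [] => 1
  | (k, e) :: rest => sumR n (fun n1 => coef k e n1 * Mstar_l n1 rest)
  end.
Definition Mstar (n : nat) (ks : list nat) (es : list R) : R := Mstar_l n (combine ks es).

Fixpoint Hstrict_l (n : nat) (l : list (nat * R)) : R :=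
  match l with
  | [] => 1
  | (k, e) :: rest => sumR (pred n) (fun n1 => coef k e n1 * Hstrict_l n1 rest)
  end.

(* Multiple M-polylogarithm:
   Mi_k(eps; x) = sum_{n_1 > ... > n_r > 0} x^{n_1} prod_j (1 + eps_j (-1)^{n_j}) / n_j^{k_j} *)
Definition Mi_l (l : list (nat * R)) (x : R) : R :=
  match l with
  | [] => 1
  | (k, e) :: rest =>
      Series (fun i => x ^ (S i) * coef k e (S i) * Hstrict_l (S i) rest)
  end.
Definition Mi (ks : list nat) (es : list R) (x : R) : R := Mi_l (combine ks es) x.

Definition prodR (l : list R) : R := fold_right Rmult 1 l.

Fixpoint pvec (l : list R) : list R :=
  match l with
  | [] => []
  | e :: es => (e * prodR es) :: pvec es
  end.
(* q(eps) = (eps_1...eps_r, eps_1...eps_{r-1}, ..., eps_1) *)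
Definition qvec (l : list R) : list R := pvec (rev l).

Definition theword (n : nat) (ms : list nat) (es : list bool) : list (R -> R) :=
  (fun t => t ^ (n - 1)) ::
  flat_map (fun me : nat * bool => weps (snd me) :: repeat w0 (fst me - 1)) (combine ms es).

(* First sum: sum_{n_0 >= n_1 >= ... >= n_p >= 1} x^{n_p}
              prod_j (1 + eps_j (-1)^{n_{j-1}+n_j}) / n_j^{m_j} *)
Fixpoint firstsum (x : R) (prev : nat) (l : list (nat * R)) : R :=
  match l with
  | [] => x ^ prev
  | (m, e) :: rest =>
      sumR prev (fun k => (1 + e * (-1) ^ (prev + k)) / (INR k) ^ m * firstsum x k rest)
  end.

(* Main.v *)
Require Import Defs.
From Stdlib Require Import Reals List.
From Coquelicot Require Import Coquelicot.
Import ListNotations.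
Open Scope R_scope.
From Stdlib Require Import Lra Lia.

Definition bnd (a : nat -> R) := exists C, forall N, Rabs (a N) <= C.

Lemma bnd_radius a : bnd a -> Rbar_le 1 (CV_radius a).
Proof.
  intros [C HC]. destruct (CV_radius_bounded a) as [Hub _].
  apply Hub. exists C. intros N. rewrite pow1, Rmult_1_r. apply HC.
Qed.

Lemma bnd_inside a x : bnd a -> Rabs x < 1 -> Rbar_lt (Rabs x) (CV_radius a).
Proof.
  intros Hb Hx. eapply Rbar_lt_le_trans; [|apply bnd_radius, Hb]. simpl. exact Hx.
Qed.

Lemma bnd_ex a x : bnd a -> Rabs x < 1 -> ex_pseries a x.
Proof. intros; apply CV_radius_inside, bnd_inside; auto. Qed.

Definition Rep (F : R -> R) (a : nat -> R) :=
  a 0%nat = 0 /\ bnd a /\ forall t, Rabs t < 1 -> F t = PSeries a t.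

Lemma Rep_ext F G a b : (forall t, Rabs t < 1 -> F t = G t) -> (forall N, a N = b N) ->
  Rep F a -> Rep G b.
Proof.
  intros HF Hab [H0 [[C HC] HP]]. split; [rewrite <- Hab; auto|split].
  - exists C; intros N; rewrite <- Hab; auto.
  - intros t Ht. rewrite <- HF by auto. rewrite HP by auto. apply PSeries_ext; auto.
Qed.

Definition opw0 (a : nat -> R) (N : nat) : R := a N / INR N.

Lemma Rmin_Rmax_abs t b : Rabs b < 1 -> Rmin 0 b < t < Rmax 0 b -> t <> 0 /\ Rabs t < 1.
Proof.
  intros Hb H. unfold Rmin, Rmax in H. destruct (Rle_dec 0 b); split;
  try (intro; subst; lra); apply Rabs_lt_between in Hb; apply Rabs_lt_between; lra.
Qed.

Lemma step_w0 F a : Rep F a -> Rep (fun b => RInt (fun t => w0 t * F t) 0 b) (opw0 a).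
Proof.
  intros [H0 [[C HC] HP]]. split; [|split].
  - unfold opw0. rewrite H0. unfold Rdiv; ring.
  - exists C. intros N. unfold opw0. destruct N as [|N].
    + rewrite H0. unfold Rdiv. rewrite Rmult_0_l, Rabs_R0. specialize (HC 0%nat).
      pose proof (Rabs_pos (a 0%nat)); lra.
    + unfold Rdiv. rewrite Rabs_mult. rewrite Rabs_inv.
      assert (1 <= Rabs (INR (S N))). { rewrite Rabs_right; [|apply Rle_ge, pos_INR].
        rewrite S_INR; pose proof (pos_INR N); lra. }
      assert (0 < / Rabs (INR (S N)) <= 1).
      { split. apply Rinv_0_lt_compat; lra. rewrite <- Rinv_1. apply Rinv_le_contravar; lra. }
      specialize (HC (S N)). pose proof (Rabs_pos (a (S N))). nra.
  - intros b Hb.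
    assert (Hr : Rbar_lt (Rabs b) (CV_radius (PS_decr_1 a))).
    { rewrite CV_radius_decr_1. apply bnd_inside; auto. exists C; auto. }
    rewrite (RInt_ext _ (PSeries (PS_decr_1 a))).
    + rewrite RInt_PSeries by auto. apply PSeries_ext. intros [|N]; unfold opw0, PS_Int, PS_decr_1.
      * rewrite H0; simpl; unfold Rdiv; ring.
      * reflexivity.
    + intros t Ht. destruct (Rmin_Rmax_abs t b Hb Ht) as [Ht0 Ht1].
      rewrite HP by auto. rewrite (PSeries_decr_1 a t) by (apply bnd_ex; auto; exists C; auto).
      rewrite H0. unfold w0. rewrite Rplus_0_l, <- Rmult_assoc, Rinv_l, Rmult_1_l; auto.
Qed.

Fixpoint sumN (M : nat) (f : nat -> R) : R :=
  match M with O => 0 | S k => sumN k f + f k end.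

Lemma sumN_ext M f g : (forall N, (N < M)%nat -> f N = g N) -> sumN M f = sumN M g.
Proof. induction M; simpl; intros H; auto. rewrite IHM by (intros; apply H; lia). rewrite H by lia. auto. Qed.

Lemma sumN_bound M f B : (forall N, (N < M)%nat -> Rabs (f N) <= B) -> Rabs (sumN M f) <= INR M * B.
Proof.
  induction M; intros H; simpl sumN. rewrite Rabs_R0; simpl; lra.
  eapply Rle_trans; [apply Rabs_triang|].
  assert (Rabs (sumN M f) <= INR M * B) by (apply IHM; intros; apply H; lia).
  assert (Rabs (f M) <= B) by (apply H; lia). rewrite S_INR. lra.
Qed.

Lemma pm1_SS k : (-1) ^ (S (S k)) = (-1) ^ k.
Proof. simpl; ring. Qed.

Lemma pm1_S k : (-1) ^ (S k) = - (-1) ^ k.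
Proof. simpl; ring. Qed.

Lemma pm1_sq k : (-1) ^ k * (-1) ^ k = 1.
Proof. rewrite <- pow_add. replace (k+k)%nat with (2*k)%nat by lia. apply pow_1_even. Qed.

Definition opweps (e : R) (a : nat -> R) (M : nat) : R :=
  sumN M (fun N => (1 + e * (-1) ^ (M + N)) * a N) / INR M.

Definition cc (e : R) (a : nat -> R) (K : nat) : R :=
  sumN (S K) (fun N => (1 - e * (-1) ^ (K + N)) * a N).

Lemma bnd_opweps e a : Rabs e <= 1 -> bnd a -> bnd (opweps e a).
Proof.
  intros He [C HC]. exists (2 * C). intros [|M].
  - unfold opweps; simpl. unfold Rdiv; rewrite Rmult_0_l, Rabs_R0.
    specialize (HC 0%nat); pose proof (Rabs_pos (a 0%nat)); lra.
  - unfold opweps, Rdiv. rewrite Rabs_mult.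
    assert (Hs : Rabs (sumN (S M) (fun N => (1 + e * (-1) ^ (S M + N)) * a N)) <= INR (S M) * (2 * C)).
    { apply sumN_bound. intros N _. rewrite Rabs_mult.
      assert (Rabs (1 + e * (-1) ^ (S M + N)) <= 2).
      { eapply Rle_trans; [apply Rabs_triang|]. rewrite Rabs_R1, Rabs_mult, pow_1_abs. lra. }
      specialize (HC N). pose proof (Rabs_pos (a N)). pose proof (Rabs_pos (1 + e * (-1) ^ (S M + N))). nra. }
    assert (HI : 0 < INR (S M)) by (apply lt_0_INR; lia).
    rewrite Rabs_inv, (Rabs_right (INR (S M))) by lra.
    apply (Rmult_le_reg_r (INR (S M))); auto. rewrite Rmult_assoc, Rinv_l by lra. lra.
Qed.

Lemma cc_derive e a K : cc e a K = PS_derive (opweps e a) K.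
Proof.
  unfold cc, PS_derive, opweps. field_simplify_eq; [| apply not_0_INR; lia].
  apply sumN_ext. intros N _. simpl (S K + N)%nat. rewrite pm1_S. ring.
Qed.

Lemma PSeries_minus' f g t : ex_pseries f t -> ex_pseries g t ->
  PSeries (fun n => f n - g n) t = PSeries f t - PSeries g t.
Proof. intros; rewrite <- PSeries_minus by auto. apply PSeries_ext; reflexivity. Qed.

Lemma PSeries_plus' f g t : ex_pseries f t -> ex_pseries g t ->
  PSeries (fun n => f n + g n) t = PSeries f t + PSeries g t.
Proof. intros; rewrite <- PSeries_plus by auto. apply PSeries_ext; reflexivity. Qed.

Lemma ex_pseries_scal' c f t : ex_pseries f t -> ex_pseries (fun n => c * f n) t.
Proof. intros H. exact (@ex_pseries_scal R_AbsRing R_NormedModule c f t (Rmult_comm _ _) H). Qed.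

Lemma PSeries_scal' c f t : PSeries (fun n => c * f n) t = c * PSeries f t.
Proof. rewrite <- PSeries_scal. apply PSeries_ext; reflexivity. Qed.

Lemma sgn_abs b : Rabs (sgn b) = 1.
Proof. destruct b; simpl. apply Rabs_R1. rewrite Rabs_left; lra. Qed.

Lemma sgn_sq b : sgn b * sgn b = 1.
Proof. destruct b; simpl; ring. Qed.

Lemma weps_mult b a t : bnd a -> Rabs t < 1 ->
  weps b t * PSeries a t = PSeries (cc (sgn b) a) t.
Proof.
  intros Hb Ht. set (e := sgn b). set (c := cc e a).
  assert (He : Rabs e <= 1) by (unfold e; rewrite sgn_abs; lra).
  assert (Hc : ex_pseries c t).
  { apply CV_radius_inside. rewrite (CV_radius_ext c (PS_derive (opweps e a))) by (intros; apply cc_derive).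
    rewrite CV_radius_derive. apply bnd_inside; auto. apply bnd_opweps; auto. }
  assert (Ha : ex_pseries a t) by (apply bnd_ex; auto).
  assert (Ht2 : 1 - t ^ 2 <> 0).
  { pose proof Ht as Ht'. apply Rabs_lt_between in Ht'. destruct Ht'.
    assert (t * t < 1) by nra. simpl. lra. }
  assert (Key : (1 - t ^ 2) * PSeries c t = ((1 - e) + (1 + e) * t) * PSeries a t).
  { rewrite Rmult_minus_distr_r, Rmult_1_l, <- PSeries_incr_n.
    rewrite <- PSeries_minus' by (auto; apply ex_pseries_incr_n; auto).
    rewrite Rmult_plus_distr_r, Rmult_assoc, <- PSeries_incr_1.
    rewrite <- !PSeries_scal'.
    rewrite <- PSeries_plus'.
    2:{ apply ex_pseries_scal'; auto. }
    2:{ apply ex_pseries_scal'; auto. apply ex_pseries_incr_1; auto. }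
    apply PSeries_ext. intros n. rewrite PS_incr_n_simplify.
    destruct n as [|[|k]]; simpl PS_incr_1; unfold c, cc; simpl.
    - change (@zero R_NormedModule) with 0. ring.
    - change (@zero R_NormedModule) with 0. ring.
    - replace (sumN k (fun N => (1 - e * (-1 * (-1 * (-1) ^ (k + N)))) * a N))
        with (sumN k (fun N => (1 - e * (-1) ^ (k + N)) * a N)).
      2:{ apply sumN_ext; intros; f_equal; ring. }
      replace (k - 0)%nat with k by lia.
      replace ((-1) ^ (k + S k)) with (-1) by
        (replace (k + S k)%nat with (S (2 * k)) by lia; rewrite pow_1_odd; auto).
      replace ((-1) ^ (k + S (S k))) with 1 by
        (replace (k + S (S k))%nat with (2 * (S k))%nat by lia; rewrite pow_1_even; auto).
      ring. }
  apply (Rmult_eq_reg_l (1 - t ^ 2)); auto. rewrite Key.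
  unfold e, sgn, weps, wp1, wm1; destruct b; field; auto.
Qed.

Definition stepF (f : R -> R) (F : R -> R) : R -> R := fun b => RInt (fun t => f t * F t) 0 b.

Lemma step_weps b F a : Rep F a -> Rep (stepF (weps b) F) (opweps (sgn b) a).
Proof.
  intros [H0 [Hb HP]]. set (e := sgn b).
  assert (He : Rabs e <= 1) by (unfold e; rewrite sgn_abs; lra).
  split; [|split].
  - unfold opweps; simpl. unfold Rdiv; ring.
  - apply bnd_opweps; auto.
  - intros x Hx. unfold stepF.
    assert (Hr : Rbar_lt (Rabs x) (CV_radius (cc e a))).
    { rewrite (CV_radius_ext (cc e a) (PS_derive (opweps e a))) by (intros; apply cc_derive).
      rewrite CV_radius_derive. apply bnd_inside; auto. apply bnd_opweps; auto. }
    rewrite (RInt_ext _ (PSeries (cc e a))).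
    + rewrite RInt_PSeries by auto. apply PSeries_ext. intros [|N]; unfold PS_Int, opweps.
      * simpl; unfold Rdiv; ring.
      * unfold cc. f_equal. apply sumN_ext. intros k _. simpl (S N + k)%nat. rewrite pm1_S. ring.
    + intros t Ht. destruct (Rmin_Rmax_abs t x Hx Ht) as [Ht0 Ht1].
      rewrite HP by auto. apply weps_mult; auto.
Qed.

Fixpoint ap (l : list (R -> R)) (F : R -> R) : R -> R :=
  match l with [] => F | f :: fs => ap fs (stepF f F) end.

Lemma ap_app l1 l2 F t : ap (l1 ++ l2) F t = ap l2 (ap l1 F) t.
Proof. revert F; induction l1; simpl; intros; auto. Qed.

Lemma itint_ap l l' b : itint_rev 0 (rev l ++ l') b = ap l (itint_rev 0 l') b.
Proof.
  revert l' b; induction l as [|f fs IH]; intros l' b; simpl; auto.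
  rewrite <- app_assoc. simpl. rewrite IH. reflexivity.
Qed.

Lemma Rep_ap_ext l F G a : (forall t, Rabs t < 1 -> F t = G t) -> Rep (ap l F) a -> Rep (ap l G) a.
Proof.
  revert F G; induction l as [|f fs IH]; simpl; intros F G HFG HR.
  - eapply Rep_ext; [exact HFG| |exact HR]; auto.
  - eapply IH; [|exact HR]. intros t Ht. unfold stepF. apply RInt_ext.
    intros u Hu. destruct (Rmin_Rmax_abs u t Ht Hu). rewrite HFG; auto.
Qed.

Definition blk (m : nat) (e : R) (a : nat -> R) (M : nat) : R :=
  sumN M (fun N => (1 + e * (-1) ^ (M + N)) * a N) / INR M ^ m.

Lemma Rep_w0s k j e a G : Rep G (blk (S j) e a) -> Rep (ap (repeat w0 k) G) (blk (S (j + k)) e a).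
Proof.
  revert j G; induction k; intros j G H; simpl.
  - rewrite Nat.add_0_r; auto.
  - rewrite <- plus_n_Sm. apply (IHk (S j)).
    eapply Rep_ext; [| |apply step_w0, H]; auto.
    intros M. unfold opw0, blk. unfold Rdiv. rewrite Rmult_assoc. f_equal.
    change (INR M ^ S (S j)) with (INR M * INR M ^ S j). rewrite Rinv_mult. ring.
Qed.

Lemma Rep_block m b F a : (1 <= m)%nat -> Rep F a ->
  Rep (ap (weps b :: repeat w0 (m - 1)) F) (blk m (sgn b) a).
Proof.
  intros Hm H. simpl. replace m with (S (0 + (m - 1))) at 2 by lia.
  apply Rep_w0s. eapply Rep_ext; [| |apply step_weps, H]; auto.
  intros M. unfold blk, opweps. simpl. rewrite Rmult_1_r. auto.
Qed.

Fixpoint BL (L : list (nat * R)) (a : nat -> R) : nat -> R :=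
  match L with [] => a | (m, e) :: L' => BL L' (blk m e a) end.

Definition blocks (ms : list nat) (es : list bool) : list (R -> R) :=
  flat_map (fun me : nat * bool => weps (snd me) :: repeat w0 (fst me - 1)) (combine ms es).

Lemma Rep_word ms es F a : length ms = length es -> List.Forall (fun m => (1 <= m)%nat) ms ->
  Rep F a -> Rep (ap (blocks ms es) F) (BL (combine ms (map sgn es)) a).
Proof.
  revert es F a; induction ms as [|m ms IH]; intros [|b es] F a Hl Hf HR; simpl in *; try lia; auto.
  inversion Hf; subst. unfold blocks in *. simpl.
  eapply Rep_ext; [intros; symmetry; apply ap_app | |]; [intros; reflexivity|].
  apply IH; auto. apply Rep_block; auto.
Qed.

Lemma sumR_ext n f g : (forall j, (1 <= j <= n)%nat -> f j = g j) -> sumR n f = sumR n g.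
Proof. induction n; simpl; intros H; auto. rewrite IHn by (intros; apply H; lia). rewrite H by lia; auto. Qed.

Lemma sumR_plus n f g : sumR n (fun j => f j + g j) = sumR n f + sumR n g.
Proof. induction n; simpl; [ring|rewrite IHn; ring]. Qed.

Lemma sumR_scal n c f : sumR n (fun j => c * f j) = c * sumR n f.
Proof. induction n; simpl; [ring|rewrite IHn; ring]. Qed.

Lemma sumR_zero n : sumR n (fun _ => 0) = 0.
Proof. induction n; simpl; [ring|rewrite IHn; ring]. Qed.

Lemma sumR_shift n f : sumR (S n) f = f 1%nat + sumR n (fun j => f (S j)).
Proof. induction n; simpl in *; [ring|]. rewrite IHn. ring. Qed.

Lemma sumR_swap n p (f : nat -> nat -> R) :
  sumR n (fun N => sumR p (fun j => f N j)) = sumR p (fun j => sumR n (fun N => f N j)).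
Proof.
  induction n; simpl. rewrite sumR_zero; auto.
  rewrite IHn, <- sumR_plus. auto.
Qed.

Lemma sumN_sumR M f : f 0%nat = 0 -> sumN M f = sumR (pred M) f.
Proof.
  intros H0. induction M; simpl; auto. destruct M; simpl in *; [rewrite H0; ring|].
  rewrite IHM. auto.
Qed.

Lemma sumN_lin M w f g al be : sumN M (fun N => w N * (al * f N + be * g N)) =
  al * sumN M (fun N => w N * f N) + be * sumN M (fun N => w N * g N).
Proof. induction M; simpl; [ring|rewrite IHM; ring]. Qed.

Definition dl (k N : nat) : R := if Nat.eqb N k then 1 else 0.

Lemma sumN_dl M k f : sumN M (fun N => f N * dl k N) = if Nat.ltb k M then f k else 0.
Proof.
  induction M; simpl; auto. rewrite IHM. unfold dl.
  destruct (Nat.ltb_spec k M), (Nat.ltb_spec k (S M)), (Nat.eqb_spec M k); subst; try lia; ring.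
Qed.

Lemma sumR_dl n M c : sumR n (fun N => c N * dl N M) = if (Nat.leb 1 M && Nat.leb M n)%bool then c M else 0.
Proof.
  induction n; cbn [sumR]. destruct M; simpl; auto. rewrite IHn. unfold dl.
  destruct (Nat.leb_spec 1 M), (Nat.leb_spec M n), (Nat.leb_spec M (S n)), (Nat.eqb_spec M (S n));
  cbn [andb]; subst; try lia; ring.
Qed.

Lemma blk_ext m e a b M : (forall N, a N = b N) -> blk m e a M = blk m e b M.
Proof. intros H. unfold blk. f_equal. apply sumN_ext; intros; rewrite H; auto. Qed.

Lemma BL_ext L a b M : (forall N, a N = b N) -> BL L a M = BL L b M.
Proof.
  revert a b M; induction L as [|[m e] L IH]; simpl; intros a b M H; auto.
  apply IH. intros; apply blk_ext; auto.
Qed.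

Lemma blk_lin m e f g al be M : blk m e (fun N => al * f N + be * g N) M = al * blk m e f M + be * blk m e g M.
Proof. unfold blk. rewrite sumN_lin. unfold Rdiv; ring. Qed.

Lemma BL_lin L f g al be M : BL L (fun N => al * f N + be * g N) M = al * BL L f M + be * BL L g M.
Proof.
  revert f g M; induction L as [|[m e] L IH]; simpl; intros f g M; auto.
  rewrite (BL_ext L _ (fun N => al * blk m e f N + be * blk m e g N)) by (intros; apply blk_lin).
  apply IH.
Qed.

Lemma BL_zero L M : BL L (fun _ => 0) M = 0.
Proof.
  rewrite (BL_ext L _ (fun N => 0 * (fun _ => 0) N + 0 * (fun _ => 0) N)) by (intros; ring).
  rewrite BL_lin. ring.
Qed.

Lemma BL_sumR L n f c (g : nat -> nat -> R) M :
  BL L (fun K => f K - sumR n (fun N => c N * g N K)) M = BL L f M - sumR n (fun N => c N * BL L (g N) M).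
Proof.
  revert f; induction n; intros f; simpl.
  - rewrite (BL_ext L _ f) by (intros; ring). ring.
  - transitivity (BL L (fun K => (f K - c (S n) * g (S n) K) - sumR n (fun N => c N * g N K)) M).
    { apply BL_ext; intros; ring. }
    etransitivity; [apply (IHn (fun K => f K - c (S n) * g (S n) K))|].
    rewrite (BL_ext L (fun K => f K - c (S n) * g (S n) K) (fun K => 1 * f K + (- c (S n)) * g (S n) K)) by (intros; ring).
    rewrite BL_lin. ring.
Qed.

Definition miC (l : list (nat * R)) (N : nat) : R :=
  match l with [] => dl 0 N | (k, e) :: rest => coef k e N * Hstrict_l N rest end.

Lemma INR0_pow m : (1 <= m)%nat -> INR 0 ^ m = 0.
Proof. intros H; destruct m; [lia|]. simpl; ring. Qed.

Lemma coef_0 k e : (1 <= k)%nat -> coef k e 0 = 0.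
Proof. intros H. unfold coef. rewrite INR0_pow by auto. unfold Rdiv; rewrite Rinv_0; ring. Qed.

Lemma K1 m e k M : (1 <= m)%nat ->
  blk m e (dl k) M = miC [(m, e * (-1) ^ k)] M - sumR k (fun N => ((1 + e * (-1) ^ (k + N)) / INR N ^ m) * dl N M).
Proof.
  intros Hm. unfold blk, miC. simpl Hstrict_l. rewrite Rmult_1_r.
  rewrite sumN_dl, sumR_dl. destruct M as [|M].
  - simpl (Nat.ltb k 0). rewrite coef_0 by auto. simpl. unfold Rdiv; ring.
  - unfold coef. destruct (Nat.ltb_spec k (S M)), (Nat.leb_spec 1 (S M)), (Nat.leb_spec (S M) k);
    cbn [andb]; try lia.
    + rewrite !pow_add. unfold Rdiv; ring.
    + rewrite !pow_add. unfold Rdiv; ring.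
Qed.

Lemma sign_identity e e' A B : e * e = 1 -> A * A = 1 ->
  (1 + e' * (B * A)) * (1 + e * A) = (1 + e' * e * B) * (1 + e * A).
Proof.
  intros He HA.
  assert (E : (1 + e' * (B * A)) * (1 + e * A) - (1 + e' * e * B) * (1 + e * A)
              = e' * B * (A * (1 - e * e) + e * (A * A - 1))) by ring.
  rewrite He, HA in E. lra.
Qed.

Lemma blk_miC m' e' k e rest M : (1 <= k)%nat -> e * e = 1 ->
  blk m' e' (miC ((k, e) :: rest)) M = miC ((m', e' * e) :: (k, e) :: rest) M.
Proof.
  intros Hk He. unfold blk, miC. cbn [Hstrict_l].
  rewrite sumN_sumR by (rewrite coef_0 by auto; ring).
  unfold coef at 1. unfold Rdiv at 1 2.
  rewrite (sumR_ext _ _ (fun N => (1 + e' * e * (-1) ^ M) * (coef k e N * Hstrict_l N rest))).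
  - rewrite sumR_scal. unfold coef. unfold Rdiv; ring.
  - intros N _. unfold coef. rewrite pow_add.
    transitivity (((1 + e' * ((-1) ^ M * (-1) ^ N)) * (1 + e * (-1) ^ N)) * / INR N ^ k * Hstrict_l N rest).
    { unfold Rdiv; ring. }
    rewrite sign_identity by (auto; apply pm1_sq). unfold Rdiv; ring.
Qed.

Definition hsgn (l : list (nat * R)) : R := match l with [] => 1 | (_, e) :: _ => e end.

Fixpoint acc (L l : list (nat * R)) : list (nat * R) :=
  match L with [] => l | (m, e') :: L' => acc L' ((m, e' * hsgn l) :: l) end.

Definition goodh (l : list (nat * R)) : Prop :=
  match l with [] => False | (k, e) :: _ => (1 <= k)%nat /\ e * e = 1 end.

Lemma BL_miC L l M : goodh l -> List.Forall (fun me : nat * R => (1 <= fst me)%nat /\ snd me * snd me = 1) L ->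
  BL L (miC l) M = miC (acc L l) M.
Proof.
  revert l M; induction L as [|[m e'] L IH]; intros l M Hl HL; simpl; auto.
  inversion HL; subst. simpl in H1. destruct l as [|[k e] rest]; [contradiction|].
  destruct Hl as [Hk He]. simpl.
  rewrite (BL_ext L _ (miC ((m, e' * e) :: (k, e) :: rest))) by (intros; apply blk_miC; auto).
  apply IH; auto. simpl. split; [lia|]. destruct H1.
  transitivity ((e' * e') * (e * e)); [ring|]. rewrite H0, He; ring.
Qed.

Lemma prodR_app l e : prodR (l ++ [e]) = prodR l * e.
Proof. induction l; simpl; [ring|rewrite IHl; ring]. Qed.

Lemma pvec_app l e : pvec (l ++ [e]) = map (fun y => y * e) (pvec l) ++ [e].
Proof.
  induction l; simpl. rewrite Rmult_1_r; auto.
  rewrite IHl, prodR_app. f_equal. ring.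
Qed.

Lemma pvec_length l : length (pvec l) = length l.
Proof. induction l; simpl; auto. Qed.

Lemma qvec_length l : length (qvec l) = length l.
Proof. unfold qvec. rewrite pvec_length, length_rev; auto. Qed.

Lemma combine_app_single {A B} (l1 : list A) (l2 : list B) a b :
  length l1 = length l2 -> combine (l1 ++ [a]) (l2 ++ [b]) = combine l1 l2 ++ [(a, b)].
Proof.
  revert l2; induction l1; intros [|c l2] H; simpl in *; try lia; auto.
  rewrite IHl1 by lia; auto.
Qed.

Lemma acc_closed ms ss k s0 rest : length ms = length ss ->
  acc (combine ms ss) ((k, s0) :: rest) = combine (rev ms) (map (Rmult s0) (qvec ss)) ++ (k, s0) :: rest.
Proof.
  revert ss k s0 rest; induction ms as [|m ms IH]; intros [|e ss] k s0 rest Hl; simpl in *; try lia; auto.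
  rewrite IH by lia. unfold qvec at 2. simpl rev. rewrite pvec_app, map_app, map_map.
  change (map (Rmult s0) [e]) with [s0 * e]. rewrite combine_app_single.
  2:{ rewrite length_rev, length_map, pvec_length, length_rev. lia. }
  rewrite <- app_assoc. simpl. f_equal.
  - f_equal. unfold qvec. apply map_ext. intros; ring.
  - f_equal. f_equal. ring.
Qed.

Lemma PSeries_miC k e rest x : (1 <= k)%nat -> ex_pseries (miC ((k, e) :: rest)) x ->
  PSeries (miC ((k, e) :: rest)) x = Mi_l ((k, e) :: rest) x.
Proof.
  intros Hk Hex. unfold PSeries, Mi_l. rewrite Series_incr_1.
  - unfold miC. rewrite coef_0 by auto. rewrite Rmult_0_l, Rmult_0_l, Rplus_0_l.
    apply Series_ext. intros; ring.
  - eapply ex_series_ext; [|exact Hex]. intros n. rewrite <- pow_n_pow. apply Rmult_comm.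
Qed.

Lemma PSeries_zero x : PSeries (fun _ => 0) x = 0.
Proof. rewrite (PSeries_ext _ (fun n => 0 * (fun _ => 0) n)) by (intros; ring). rewrite PSeries_scal'. ring. Qed.

Lemma PSeries_dl n x : Rabs x < 1 -> PSeries (dl n) x = x ^ n.
Proof.
  intros Hx.
  rewrite (PSeries_ext _ (PS_incr_n (dl 0) n)).
  2:{ intros N. rewrite PS_incr_n_simplify. unfold dl.
      destruct (Compare_dec.le_lt_dec n N), (Nat.eqb_spec N n), (Nat.eqb_spec (N - n) 0); try lia; auto. }
  rewrite PSeries_incr_n. rewrite PSeries_decr_1.
  - unfold dl at 1; simpl. rewrite (PSeries_ext _ (fun _ => 0)).
    + rewrite PSeries_zero. ring.
    + intros N. reflexivity.
  - apply bnd_ex; auto. exists 1. intros N; unfold dl. destruct (Nat.eqb N 0); rewrite ?Rabs_R1, ?Rabs_R0; lra.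
Qed.

Lemma bnd_BL ms es a : a 0%nat = 0 -> bnd a -> length ms = length es ->
  List.Forall (fun m => (1 <= m)%nat) ms -> bnd (BL (combine ms (map sgn es)) a).
Proof.
  intros H0 Hb Hl Hf. assert (HR : Rep (PSeries a) a) by (split; [|split]; auto).
  destruct (Rep_word ms es _ _ Hl Hf HR) as [_ [Hb' _]]. auto.
Qed.

Lemma bnd_dl N : bnd (dl N).
Proof. exists 1. intros M; unfold dl. destruct (Nat.eqb M N); rewrite ?Rabs_R1, ?Rabs_R0; lra. Qed.

Lemma bnd_coef m s : Rabs s <= 1 -> bnd (fun M => coef m s M * 1).
Proof.
  intros Hs. exists 2. intros M. rewrite Rmult_1_r. unfold coef, Rdiv. rewrite Rabs_mult.
  assert (H1 : Rabs (1 + s * (-1) ^ M) <= 2).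
  { eapply Rle_trans; [apply Rabs_triang|]. rewrite Rabs_R1, Rabs_mult, pow_1_abs. lra. }
  assert (H2 : Rabs (/ INR M ^ m) <= 1).
  { destruct M as [|M].
    - destruct m; simpl. rewrite Rinv_1, Rabs_R1; lra. rewrite Rmult_0_l, Rinv_0, Rabs_R0; lra.
    - assert (1 <= INR (S M)) by (rewrite S_INR; pose proof (pos_INR M); lra).
      assert (1 <= INR (S M) ^ m) by (apply pow_R1_Rle; auto).
      rewrite Rabs_inv, Rabs_right by lra. rewrite <- Rinv_1. apply Rinv_le_contravar; lra. }
  pose proof (Rabs_pos (1 + s * (-1) ^ M)). pose proof (Rabs_pos (/ INR M ^ m)). nra.
Qed.

Lemma ex_pseries_zero x : Rabs x < 1 -> ex_pseries (fun _ => 0) x.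
Proof. intros; apply bnd_ex; auto. exists 0; intros; rewrite Rabs_R0; lra. Qed.

Lemma PSeries_sumR x n c (B : nat -> nat -> R) : Rabs x < 1 ->
  (forall N, (1 <= N <= n)%nat -> ex_pseries (B N) x) ->
  ex_pseries (fun M => sumR n (fun N => c N * B N M)) x /\
  PSeries (fun M => sumR n (fun N => c N * B N M)) x = sumR n (fun N => c N * PSeries (B N) x).
Proof.
  intros Hx. induction n; intros HB; simpl.
  - split. apply ex_pseries_zero; auto. apply PSeries_zero.
  - destruct IHn as [IH1 IH2]. intros; apply HB; lia.
    assert (E : ex_pseries (fun M => c (S n) * B (S n) M) x) by (apply ex_pseries_scal', HB; lia).
    split.
    + exact (@ex_pseries_plus R_AbsRing R_NormedModule _ _ x IH1 E).
    + rewrite PSeries_plus' by auto. rewrite IH2, PSeries_scal'. auto.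
Qed.

Lemma PSeries_lin x n c A (B : nat -> nat -> R) : Rabs x < 1 -> ex_pseries A x ->
  (forall N, (1 <= N <= n)%nat -> ex_pseries (B N) x) ->
  PSeries (fun M => A M - sumR n (fun N => c N * B N M)) x = PSeries A x - sumR n (fun N => c N * PSeries (B N) x).
Proof.
  intros Hx HA HB. destruct (PSeries_sumR x n c B Hx HB) as [E1 E2].
  rewrite PSeries_minus' by auto. rewrite E2. auto.
Qed.

Lemma prodR_sgn_sq l : prodR (map sgn l) * prodR (map sgn l) = 1.
Proof.
  induction l; simpl. ring.
  transitivity ((sgn a * sgn a) * (prodR (map sgn l) * prodR (map sgn l))); [ring|].
  rewrite sgn_sq, IHl. ring.
Qed.

Lemma prodR_cons a l : prodR (a :: l) = a * prodR l.
Proof. reflexivity. Qed.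

Definition T (s : R) (n : nat) (ms : list nat) (es : list bool) (j : nat) (x : R) : R :=
  Mi (rev (skipn (j - 1) ms)) (map (Rmult s) (qvec (map sgn (skipn j es))) ++ [s]) x
  * (1 + s * prodR (map sgn (firstn j es)) * (-1) ^ n)
  * Mstar n (firstn (j - 1) ms) (map (Rmult s) (pvec (map sgn (skipn 1 (firstn j es))))).

Lemma KEY s n m1 b1 ms' es' j x : s * s = 1 -> (1 <= j <= length es')%nat ->
  sumR n (fun N => ((1 + sgn b1 * (-1) ^ (n + N)) / INR N ^ m1) * T s N ms' es' j x)
  = T s n (m1 :: ms') (b1 :: es') (S j) x.
Proof.
  intros Hs Hj. destruct es' as [|b2 es'']; simpl in Hj; [lia|]. destruct j as [|j']; [lia|].
  unfold T. replace (S j' - 1)%nat with j' by lia. replace (S (S j') - 1)%nat with (S j') by lia.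
  cbn [skipn firstn map pvec]. rewrite ?prodR_cons.
  set (MI := Mi _ _ x).
  set (Q := prodR (map sgn (firstn j' es''))).
  unfold Mstar at 2. cbn [combine Mstar_l].
  set (MS := fun N => Mstar_l N (combine (firstn j' ms') (map (Rmult s) (pvec (map sgn (firstn j' es'')))))).
  unfold Mstar. fold (MS n).
  rewrite <- sumR_scal. apply sumR_ext. intros N _. fold (MS N).
  assert (HP : (s * (sgn b2 * Q)) * (s * (sgn b2 * Q)) = 1).
  { transitivity ((s * s) * (sgn b2 * sgn b2) * (Q * Q)); [ring|].
    rewrite Hs, sgn_sq. unfold Q; rewrite prodR_sgn_sq. ring. }
  unfold coef. rewrite pow_add.
  transitivity (MI * MS N * / INR N ^ m1 *
     ((1 + sgn b1 * ((-1) ^ n * (-1) ^ N)) * (1 + (s * (sgn b2 * Q)) * (-1) ^ N))).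
  { unfold Rdiv; ring. }
  rewrite sign_identity by (auto; apply pm1_sq). unfold Rdiv; ring.
Qed.

Definition J (n : nat) (ms : list nat) (es : list bool) (x : R) : R :=
  PSeries (BL (combine ms (map sgn es)) (dl n)) x.

Definition RHSf (n : nat) (ms : list nat) (es : list bool) (x : R) : R :=
  (-1) ^ (length ms) * firstsum x n (combine ms (map sgn es))
  + / 2 * sumR (length ms) (fun j => (-1) ^ (j - 1) * (T (-1) n ms es j x + T 1 n ms es j x)).

Lemma good_L ms es : List.Forall (fun m => (1 <= m)%nat) ms ->
  List.Forall (fun me : nat * R => (1 <= fst me)%nat /\ snd me * snd me = 1) (combine ms (map sgn es)).
Proof.
  revert es; induction ms; intros [|b es] H; simpl; auto. inversion H; subst.
  constructor; auto. simpl. split; auto. apply sgn_sq.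
Qed.

Lemma acc_good L l : goodh l ->
  List.Forall (fun me : nat * R => (1 <= fst me)%nat /\ snd me * snd me = 1) L -> goodh (acc L l).
Proof.
  revert l; induction L as [|[m e] L IH]; intros l Hl HL; simpl; auto.
  inversion HL as [|? ? Hme HL']; subst. apply IH; auto. simpl in *. destruct Hme as [Hm He]. split; auto.
  destruct l as [|[k e0] r]; simpl in *; [contradiction|]. destruct Hl as [Hk He0].
  transitivity ((e * e) * (e0 * e0)); [ring|]. rewrite He, He0; ring.
Qed.

Lemma PSeries_miC' l x : goodh l -> ex_pseries (miC l) x -> PSeries (miC l) x = Mi_l l x.
Proof. destruct l as [|[k e] r]; simpl; [contradiction|]. intros [Hk _]. apply PSeries_miC; auto. Qed.

Lemma MiS_eq m1 ms' es' sg x : length ms' = length es' -> Rabs x < 1 -> sg * sg = 1 ->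
  List.Forall (fun m => (1 <= m)%nat) (m1 :: ms') ->
  PSeries (BL (combine ms' (map sgn es')) (miC [(m1, sg)])) x
  = Mi (rev (m1 :: ms')) (map (Rmult sg) (qvec (map sgn es')) ++ [sg]) x.
Proof.
  intros Hl Hx Hsg Hf. inversion Hf; subst.
  assert (Hg : goodh [(m1, sg)]) by (simpl; auto).
  assert (HL := good_L ms' es' H2).
  assert (Hb : bnd (BL (combine ms' (map sgn es')) (miC [(m1, sg)]))).
  { apply bnd_BL; auto. simpl. rewrite coef_0 by auto. ring.
    apply bnd_coef. assert (Rabs sg * Rabs sg = 1) by (rewrite <- Rabs_mult, Hsg; apply Rabs_R1).
    pose proof (Rabs_pos sg). nra. }
  rewrite (PSeries_ext _ (miC (acc (combine ms' (map sgn es')) [(m1, sg)]))) by (intros; apply BL_miC; auto).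
  rewrite PSeries_miC'.
  - unfold Mi. rewrite acc_closed by (rewrite length_map; auto). simpl rev.
    rewrite combine_app_single; auto.
    rewrite length_map, qvec_length, length_rev, length_map. auto.
  - apply acc_good; auto.
  - eapply ex_series_ext; [|apply (bnd_ex _ x Hb Hx)]. intros N. simpl. f_equal. apply BL_miC; auto.
Qed.

Lemma pm1_cases n : (-1) ^ n = 1 \/ (-1) ^ n = -1.
Proof.
  destruct (Nat.Even_or_Odd n) as [[k Hk]|[k Hk]]; subst.
  left; apply pow_1_even. right. replace (2 * k + 1)%nat with (S (2 * k)) by lia. apply pow_1_odd.
Qed.

Lemma case_pm (G : R -> R) sg : sg = 1 \/ sg = -1 ->
  G sg = / 2 * (G (-1) * (1 + -1 * sg) + G 1 * (1 + 1 * sg)).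
Proof. intros [H|H]; subst; field. Qed.

Lemma T1 s n m1 ms' b1 es' x :
  T s n (m1 :: ms') (b1 :: es') 1 x =
  Mi (rev (m1 :: ms')) (map (Rmult s) (qvec (map sgn es')) ++ [s]) x * (1 + s * sgn b1 * (-1) ^ n).
Proof.
  unfold T. replace (1 - 1)%nat with 0%nat by reflexivity. cbn [skipn firstn map].
  rewrite prodR_cons. unfold Mstar. cbn [combine Mstar_l]. unfold prodR; simpl fold_right. ring.
Qed.

Lemma main_ind x : Rabs x < 1 -> forall ms es, length ms = length es ->
  List.Forall (fun m => (1 <= m)%nat) ms ->
  forall n, (1 <= n)%nat -> J n ms es x = RHSf n ms es x.
Proof.
  intros Hx. induction ms as [|m1 ms' IH]; intros [|b1 es'] Hl Hf n Hn; simpl in Hl; try lia.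
  - unfold J, RHSf. simpl. rewrite PSeries_dl by auto. ring.
  - inversion Hf as [|? ? Hm1 Hf']; subst.
    set (L' := combine ms' (map sgn es')).
    set (sig := sgn b1 * (-1) ^ n).
    set (c := fun N => (1 + sgn b1 * (-1) ^ (n + N)) / INR N ^ m1).
    assert (Hsig : sig = 1 \/ sig = -1).
    { unfold sig. destruct (pm1_cases n) as [E|E]; rewrite E; destruct b1; simpl; [left|right|right|left]; ring. }
    assert (Hsig2 : sig * sig = 1) by (destruct Hsig as [E|E]; rewrite E; ring).
    assert (HJ : J n (m1 :: ms') (b1 :: es') x =
      PSeries (BL L' (miC [(m1, sig)])) x - sumR n (fun N => c N * J N ms' es' x)).
    { unfold J. cbn [combine map BL]. fold L'.
      rewrite (PSeries_ext _ (fun M => BL L' (miC [(m1, sig)]) M - sumR n (fun N => c N * BL L' (dl N) M))).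
      2:{ intros M. rewrite (BL_ext _ _ (fun K => miC [(m1, sig)] K - sumR n (fun N => c N * dl N K)))
            by (intros; apply K1; auto). apply BL_sumR. }
      apply PSeries_lin; auto.
      - apply bnd_ex; auto. apply bnd_BL; auto. simpl. rewrite coef_0 by auto. ring.
        apply bnd_coef. destruct Hsig as [E|E]; rewrite E; [rewrite Rabs_R1|rewrite Rabs_left]; lra.
      - intros N HN. apply bnd_ex; auto. apply bnd_BL; auto. unfold dl. destruct (Nat.eqb_spec 0 N); auto; lia.
        apply bnd_dl. }
    rewrite HJ. clear HJ.
    rewrite (sumR_ext _ _ (fun N => c N * RHSf N ms' es' x)) by (intros N HN; rewrite IH; auto; lia).
    unfold L'. rewrite MiS_eq by (auto; constructor; auto).
    set (p' := length ms').
    assert (HA : sumR n (fun N => c N * RHSf N ms' es' x) =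
       (-1) ^ p' * sumR n (fun N => c N * firstsum x N (combine ms' (map sgn es')))
       + / 2 * sumR p' (fun j => (-1) ^ (j - 1) *
            (T (-1) n (m1 :: ms') (b1 :: es') (S j) x + T 1 n (m1 :: ms') (b1 :: es') (S j) x))).
    { unfold RHSf. fold p'.
      transitivity (sumR n (fun N => (-1) ^ p' * (c N * firstsum x N (combine ms' (map sgn es'))))
         + / 2 * sumR n (fun N => sumR p' (fun j => (-1) ^ (j - 1) * (c N * T (-1) N ms' es' j x)
                                                 + (-1) ^ (j - 1) * (c N * T 1 N ms' es' j x)))).
      { rewrite <- sumR_scal, <- sumR_plus. apply sumR_ext; intros N _.
        rewrite Rmult_plus_distr_l. f_equal; [ring|].
        transitivity (/ 2 * (c N * sumR p' (fun j => (-1) ^ (j - 1) * (T (-1) N ms' es' j x + T 1 N ms' es' j x)))).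
        ring. f_equal. rewrite <- sumR_scal. apply sumR_ext; intros; ring. }
      rewrite sumR_scal, sumR_swap. f_equal. f_equal. apply sumR_ext. intros j Hj.
      rewrite sumR_plus, !sumR_scal. unfold c. rewrite <- !KEY; auto; try ring; unfold p' in *; lia. }
    rewrite HA. clear HA. unfold RHSf. cbn [length combine map firstsum]. fold p'.
    rewrite sumR_shift, T1, T1. cbv beta.
    rewrite (sumR_ext p' (fun j => (-1) ^ (S j - 1) * (T (-1) n (m1 :: ms') (b1 :: es') (S j) x + T 1 n (m1 :: ms') (b1 :: es') (S j) x)) (fun j => -1 * ((-1) ^ (j - 1) * (T (-1) n (m1 :: ms') (b1 :: es') (S j) x + T 1 n (m1 :: ms') (b1 :: es') (S j) x)))).
    2:{ intros j Hj. replace (S j - 1)%nat with (S (j - 1)) by lia. simpl. ring. }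
    rewrite sumR_scal.
    rewrite (case_pm (fun s => Mi (rev (m1 :: ms')) (map (Rmult s) (qvec (map sgn es')) ++ [s]) x) sig Hsig).
    unfold sig. simpl pow. fold c. unfold c. ring.
Qed.

Lemma Rep_init n : (1 <= n)%nat ->
  Rep (itint_rev 0 [fun t => t ^ (n - 1)]) (fun N => / INR n * dl n N).
Proof.
  intros Hn. split; [|split].
  - unfold dl. destruct (Nat.eqb_spec 0 n); [lia|]. ring.
  - exists (Rabs (/ INR n)). intros N. rewrite Rabs_mult. unfold dl.
    destruct (Nat.eqb N n); rewrite ?Rabs_R1, ?Rabs_R0; pose proof (Rabs_pos (/ INR n)); nra.
  - intros t Ht. rewrite PSeries_scal', PSeries_dl by auto. simpl.
    rewrite (RInt_ext _ (fun u => u ^ (n - 1))) by (intros; apply Rmult_1_r).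
    rewrite (is_RInt_unique _ _ _ _ (is_RInt_pow 0 t (n - 1))).
    replace (S (n - 1)) with n by lia. rewrite pow_i by lia. unfold Rdiv. ring.
Qed.

Lemma LHS_eq n ms es x : (1 <= n)%nat -> length ms = length es ->
  List.Forall (fun m => (1 <= m)%nat) ms -> Rabs x < 1 ->
  INR n * itint 0 (theword n ms es) x = J n ms es x.
Proof.
  intros Hn Hl Hf Hx. unfold itint, theword. simpl rev.
  rewrite itint_ap. fold (blocks ms es).
  destruct (Rep_word ms es _ _ Hl Hf (Rep_init n Hn)) as [_ [_ HP]].
  rewrite HP by auto. unfold J.
  rewrite (PSeries_ext _ (fun N => / INR n * BL (combine ms (map sgn es)) (dl n) N)).
  - rewrite PSeries_scal'. field. apply not_0_INR; lia.
  - intros N. rewrite (BL_ext _ _ (fun K => / INR n * dl n K + 0 * dl n K)) by (intros; ring).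
    rewrite BL_lin. ring.
Qed.

Theorem mainTheorem9 (n p : nat) (ms : list nat) (es : list bool) (x : R) :
  (1 <= n)%nat ->
  length ms = p -> length es = p ->
  List.Forall (fun m => (1 <= m)%nat) ms ->
  Rabs x < 1 ->
  INR n * itint 0 (theword n ms es) x =
    (-1) ^ p * firstsum x n (combine ms (map sgn es))
  + / 2 * sumR p (fun j =>
      (-1) ^ (j - 1)
      * Mi (rev (skipn (j - 1) ms))
           (map Ropp (qvec (map sgn (skipn j es))) ++ [-1]) x
      * (1 - prodR (map sgn (firstn j es)) * (-1) ^ n)
      * Mstar n (firstn (j - 1) ms) (map Ropp (pvec (map sgn (skipn 1 (firstn j es))))))
  + / 2 * sumR p (fun j =>
      (-1) ^ (j - 1)
      * Mi (rev (skipn (j - 1) ms))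
           (qvec (map sgn (skipn j es)) ++ [1]) x
      * (1 + prodR (map sgn (firstn j es)) * (-1) ^ n)
      * Mstar n (firstn (j - 1) ms) (pvec (map sgn (skipn 1 (firstn j es))))).
Proof.
  intros Hn Hlm Hle Hf Hx.
  rewrite LHS_eq by (auto; lia). rewrite main_ind by (auto; lia).
  unfold RHSf. rewrite Hlm. rewrite Rplus_assoc. f_equal.
  rewrite <- Rmult_plus_distr_l, <- sumR_plus. f_equal. apply sumR_ext. intros j _.
  unfold T.
  assert (E1 : forall l, map Ropp l = map (Rmult (-1)) l) by (intros; apply map_ext; intros; ring).
  assert (E2 : forall l, l = map (Rmult 1) l) by (intros; rewrite <- (map_id l) at 1; apply map_ext; intros; ring).
  rewrite !E1. rewrite <- !E2. ring.
Qed.
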